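(* Let $U\in\mathcal U_n$ and let $U'\in\mathcal U_{n+1}$ be obtained from $U$ by adding an $(n+1)$-st unit interval $I_{n+1}$ to the right of the intervals of $U$. Then the Dyck path $p(U')$ is obtained from $p(U)$ by adding a final maximal peak.
   Context: A unit interval order on $\{1,\dots,n\}$ is given by closed intervals $I_1,\dots,I_n$ of length $1$ in $\mathbb R$, numbered from left to right, with $i\prec j$ iff $I_i$ lies strictly to the left of $I_j$; $\mathcal U_n$ is the set of these. ''Adding an interval to the right'' means $I_{n+1}$ is a unit interval placed so that $I_1,\dots,I_{n+1}$ are still numbered from left to right. A Dyck path of length $n$ is a lattice path from $(0,0)$ to $(n,n)$ with up steps $a$ and right steps $b$ never going below $y=x$; its area sequence lists row by row from bottom to top the number of unit boxes between path and diagonal. For a nonnegative integer sequence $w=(w_1,\dots,w_n)$, $P(w)$ is the poset on $\{1,\dots,n\}$ with $i\prec j$ iff $w_j-w_i\ge2$, or $w_j-w_i=1$ and $i<j$. For each $U\in\mathcal U_n$ there is a unique $w$ that is the area sequence of a Dyck path with $P(w)$ isomorphic to $U$; $p(U)$ is the Dyck path with this area sequence. A peak is an up step immediately followed by a right step (a factor $ab$); adding a peak means inserting the factor $ab$ somewhere into the word of the path. A peak is maximal if the top of its up step lies on the highest line of slope $1$ touching the path; the final maximal peak is the last maximal peak of the path. ''Adding a final maximal peak'' means the inserted peak is the final maximal peak of the resulting path. *)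

(* Defs.v *)
From HB Require Import structures.
From mathcomp Require Import all_boot all_order all_algebra.
Set Implicit Arguments. Unset Strict Implicit. Unset Printing Implicit Defensive.
Import Order.TTheory GRing.Theory Num.Theory.
Local Open Scope ring_scope.

(* Elements of {1,...,n} are represented 0-based by 0,...,n-1 (order preserved). *)

(** A configuration of n unit intervals numbered from
    left to right is given by the sorted sequence [x] of their left endpoints:
    I_i = [x_i, x_i + 1].  i precedes j iff I_i lies strictly left of I_j. *)
Definition uio_rel {R : realFieldType} (x : seq R) : rel nat :=
  fun i j => nth 0 x i + 1 < nth 0 x j.

Definition unit_interval_config {R : realFieldType} (n : nat) (x : seq R) : Prop :=
  size x = n /\ sorted <=%R x.

(** Dyck words: true = up step a, false = right step b. *)
Definition height (D : seq bool) (k : nat) : int :=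
  (count id (take k D))%:Z - (count negb (take k D))%:Z.

Definition dyck (n : nat) (D : seq bool) : Prop :=
  size D = (2 * n)%N /\ count id D = n /\ (forall k, 0 <= height D k).

(** Area sequence: for the i-th up step (row i, bottom to top), the number of
    full boxes between path and diagonal in that row equals
    (#a - #b) before that up step. *)
Definition area (D : seq bool) : seq nat :=
  [seq (count id (take k D) - count negb (take k D))%N
   | k <- iota 0 (size D) & nth false D k].

Definition Pw (w : seq nat) : rel nat :=
  fun i j => ((nth 0%N w i + 2 <= nth 0%N w j)%N)
             || ((nth 0%N w j == (nth 0%N w i).+1) && (i < j)%N).

Definition rel_iso (n : nat) (r1 r2 : rel nat) : Prop :=
  exists f : 'I_n -> 'I_n, bijective f /\
    forall i j : 'I_n, r1 i j = r2 (f i) (f j).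

Definition peak_at (D : seq bool) (k : nat) : Prop :=
  (k.+1 < size D)%N /\ nth false D k = true /\ nth false D k.+1 = false.

(** Maximal peak: the top of its up step (the path point after k+1 steps)
    lies on the highest line of slope 1 touching the path, i.e. y - x is
    maximal among all lattice points of the path. *)
Definition max_peak_at (D : seq bool) (k : nat) : Prop :=
  peak_at D k /\ (forall j, (j <= size D)%N -> height D j <= height D k.+1).

Definition final_max_peak_at (D : seq bool) (k : nat) : Prop :=
  max_peak_at D k /\ (forall j, max_peak_at D j -> (j <= k)%N).

Definition adds_final_max_peak (D D' : seq bool) : Prop :=
  exists u v : seq bool,
    D = u ++ v /\ D' = u ++ [:: true; false] ++ v /\ final_max_peak_at D' (size u).

(* Main.v *)
Require Import Defs.
From HB Require Import structures.
From mathcomp Require Import all_boot all_order all_algebra.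
From mathcomp Require Import zify.
Import Order.TTheory GRing.Theory Num.Theory.
Set Implicit Arguments. Unset Strict Implicit. Unset Printing Implicit Defensive.


Fixpoint areaR (h : nat) (D : seq bool) : seq nat :=
  match D with
  | [::] => [::]
  | true :: D' => h :: areaR h.+1 D'
  | false :: D' => areaR h.-1 D'
  end.
Fixpoint nn (h : nat) (D : seq bool) : bool :=
  match D with
  | [::] => true
  | true :: D' => nn h.+1 D'
  | false :: D' => (0 < h) && nn h.-1 D'
  end.
Fixpoint endh (h : nat) (D : seq bool) : nat :=
  match D with
  | [::] => h
  | true :: D' => endh h.+1 D'
  | false :: D' => endh h.-1 D'
  end.

Lemma areaR_cat h u s : areaR h (u ++ s) = areaR h u ++ areaR (endh h u) s.
Proof. by elim: u h => [|[] u IH] h //=; rewrite IH. Qed.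
Lemma nn_cat h u s : nn h (u ++ s) = nn h u && nn (endh h u) s.
Proof. by elim: u h => [|[] u IH] h //=; rewrite IH ?andbA. Qed.
Lemma endh_cat h u s : endh h (u ++ s) = endh (endh h u) s.
Proof. by elim: u h => [|[] u IH] h //=. Qed.
Lemma size_areaR h D : size (areaR h D) = count id D.
Proof. by elim: D h => [|[] D IH] h //=; rewrite IH. Qed.
Lemma endhE h D : nn h D ->
  endh h D = (h + count id D - count negb D)%N /\ (count negb D <= h + count id D)%N.
Proof.
elim: D h => [|[] D IH] h /=; first by rewrite addn0 subn0.
  by move=> /IH [-> le]; split; lia.
by move=> /andP[h0 /IH [-> le]]; split; lia.
Qed.
Lemma areaR_head h D x s : areaR h D = x :: s -> (x <= h)%N.
Proof. elim: D h => [|[] D IH] h //=; first by case=> ->. by move=> /IH; lia. Qed.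
Lemma nn_notrue h D : nn h D -> count id D = 0%N -> (endh h D + size D)%N = h.
Proof.
elim: D h => [|[] D IH] h //=; first by rewrite addn0.
by move=> /andP[h0 /IH H] /H; lia.
Qed.

Lemma areaR_inj h D1 D2 : nn h D1 -> nn h D2 -> endh h D1 = endh h D2 ->
  areaR h D1 = areaR h D2 -> D1 = D2.
Proof.
elim: D1 h D2 => [|b1 D1 IH] h D2.
- move=> _ nn2 e2 a2.
  have c2: count id D2 = 0%N by rewrite -(size_areaR h) -a2.
  have := nn_notrue nn2 c2; rewrite -e2 /=.
  by case: D2 {nn2 e2 a2 c2} => //= ? ?; lia.
- case: D2 => [|b2 D2].
  + move=> nn1 _ e1 a1.
    have c1: count id (b1::D1) = 0%N by rewrite -(size_areaR h) a1.
    have := nn_notrue nn1 c1; rewrite e1 /=; lia.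
  + case: b1; case: b2 => /=.
    * by move=> n1 n2 e [] a; rewrite (IH _ _ n1 n2 e a).
    * move=> n1 /andP[h0 n2] e a; exfalso.
      have := areaR_head (esym a); lia.
    * move=> /andP[h0 n1] n2 e a; exfalso.
      have := areaR_head a; lia.
    * by move=> /andP[_ n1] /andP[_ n2] e a; rewrite (IH _ _ n1 n2 e a).
Qed.

Lemma nn_take h D :
  (forall k, count negb (take k D) <= h + count id (take k D))%N -> nn h D.
Proof.
elim: D h => [|[] D IH] h H //=.
- by apply: IH => k; have := H k.+1; rewrite /=; lia.
- have := H 1%N; rewrite /= take0 /= => h0; apply/andP; split; first lia.
  by apply: IH => k; have := H k.+1; rewrite /=; lia.
Qed.

Lemma take_nn h D k : nn h D -> (count negb (take k D) <= h + count id (take k D))%N.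
Proof.
move=> H; have : nn h (take k D ++ drop k D) by rewrite cat_take_drop.
by rewrite nn_cat => /andP[/endhE [_ ->]].
Qed.

Lemma count_idnegb (D : seq bool) : (count id D + count negb D)%N = size D.
Proof. by elim: D => [|[] D IH] //=; lia. Qed.

Lemma dyck_facts n D : dyck n D ->
  [/\ nn 0 D, endh 0 D = 0%N, size D = (2*n)%N & count id D = n].
Proof.
case=> sz [cnt H].
have nnD : nn 0 D.
  apply: nn_take => k; move: (H k); rewrite /height subr_ge0 lez_nat; lia.
split => //. have [-> _] := endhE nnD. have := count_idnegb D. lia.
Qed.

Definition areaG h (D : seq bool) : seq nat :=
  [seq (h + count id (take k D) - count negb (take k D))%N
   | k <- iota 0 (size D) & nth false D k].

Lemma areaGR h D : nn h D -> areaG h D = areaR h D.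
Proof.
elim: D h => [|b D IH] h //= H.
rewrite /areaG /= (iotaDl 1 0) filter_map.
rewrite (eq_filter (a2 := nth false D)); last by move=> k.
case: b H => /= H; rewrite -map_comp.
- congr (_ :: _); first lia.
  rewrite -IH // /areaG; apply: eq_map => k /=; rewrite add1n /= ?add0n; lia.
- case/andP: H => h0 H.
  rewrite -IH // /areaG; apply: eq_map => k /=; rewrite add1n /= ?add0n; lia.
Qed.

Lemma area_areaR D : nn 0 D -> area D = areaR 0 D.
Proof. move=> H; rewrite -areaGR //; apply: eq_map => k /=; lia. Qed.

Definition validh (h : nat) (w : seq nat) := forall i, (i < size w)%N ->
  (nth 0 w i <= (if i is j.+1 then (nth 0 w j).+1 else h))%N.

Lemma validh_areaR h D : validh h (areaR h D).
Proof.
elim: D h => [|[] D IH] h /=; first by move=> i.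
- move=> [|i] //= Hi; have := IH h.+1 i Hi; by case: i Hi.
- move=> [|i] Hi; last exact: IH.
  have := IH h.-1 0%N Hi => /=; lia.
Qed.

Lemma height_bound h D M : nn h D -> (h <= M)%N ->
  (forall x, x \in areaR h D -> x < M)%N ->
  forall j, (h + count id (take j D) - count negb (take j D) <= M)%N.
Proof.
elim: D h => [|[] D IH] h /=.
- move=> _ hM _ j; lia.
- move=> nnD hM Hx [|j] /=; first lia.
  have hM' : (h.+1 <= M)%N by apply: Hx; rewrite inE eqxx.
  have := IH h.+1 nnD hM' (fun x hx => Hx x (@mem_behead _ (h :: _) _ hx)) j; lia.
- move=> /andP[h0 nnD] hM Hx [|j] /=; first lia.
  have := IH h.-1 nnD (leq_trans (leq_pred h) hM) Hx j; lia.
Qed.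


Definition ddr (r : rel nat) (n j : nat) : nat := count (fun i => r i j) (iota 0 n).
Definition ddseq (r : rel nat) n := map (ddr r n) (iota 0 n).

Lemma perm_enum_bij n (f : 'I_n -> 'I_n) : bijective f ->
  perm_eq (map f (enum 'I_n)) (enum 'I_n).
Proof.
move=> bf; apply: uniq_perm; first by rewrite map_inj_uniq ?enum_uniq //; exact: bij_inj.
  exact: enum_uniq.
move=> i; rewrite mem_enum; case: bf => g fg gf.
by apply/mapP; exists (g i); rewrite ?mem_enum ?gf.
Qed.

Lemma ddr_ord r n j : ddr r n j = count (fun i : 'I_n => r i j) (enum 'I_n).
Proof. by rewrite /ddr -val_enum_ord count_map. Qed.

Lemma rel_iso_dd n r1 r2 : rel_iso n r1 r2 -> perm_eq (ddseq r1 n) (ddseq r2 n).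
Proof.
case=> f [bf Hf].
have E: forall j : 'I_n, ddr r1 n j = ddr r2 n (f j).
  move=> j; rewrite !ddr_ord.
  rewrite (eq_count (a2 := preim f (fun i : 'I_n => r2 i (f j)))); last by move=> i; rewrite /= Hf.
  by rewrite -count_map; apply/permP/perm_enum_bij.
rewrite /ddseq -val_enum_ord.
have P := perm_map (ddr r2 n) (perm_map val (perm_enum_bij bf)).
rewrite -(permPr P).
have -> : forall s, map (ddr r1 n) (map val s) = map (ddr r2 n) (map val (map f s)).
  by elim=> //= j s ->; rewrite E.
exact: perm_refl.
Qed.

Lemma uio_dd {R : realFieldType} n (x : seq R) y : size x = n ->
  all (fun t => (t <= y)%R) x ->
  ddseq (uio_rel (rcons x y)) n.+1 =
     rcons (ddseq (uio_rel x) n) (ddr (uio_rel (rcons x y)) n.+1 n)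
  /\ forall j, (j <= n)%N -> (ddr (uio_rel (rcons x y)) n.+1 j <= ddr (uio_rel (rcons x y)) n.+1 n)%N.
Proof.
move=> sx /allP ally.
have yn : forall j, (j <= n)%N -> (nth 0%R (rcons x y) j <= y)%R.
  move=> j jn; rewrite nth_rcons sx; case: ltnP => jn'.
    by apply: ally; rewrite mem_nth // sx.
  have -> : j = n by lia.
  by rewrite eqxx.
split.
  rewrite /ddseq -addn1 iotaD map_cat add0n /= cats1; congr rcons.
  apply/eq_in_map => j; rewrite mem_iota add0n => /andP[_ jn].
  rewrite /ddr iotaD count_cat add0n /= addn0.
  have -> : uio_rel (rcons x y) n j = false.
    rewrite /uio_rel nth_rcons sx ltnn eqxx; apply/negbTE; rewrite -leNgt.
    apply: le_trans (yn j (ltnW jn)) _; rewrite lerDl; exact: ler01.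
  rewrite addn0; apply: eq_in_count => i; rewrite mem_iota add0n => /andP[_ iin].
  by rewrite /uio_rel !nth_rcons sx iin jn.
move=> j jn; apply: sub_count => i; rewrite /uio_rel => lt.
apply: (lt_le_trans lt); rewrite [X in (_ <= X)%R]nth_rcons sx ltnn eqxx; exact: yn.
Qed.


Definition dd (w : seq nat) j := ddr (Pw w) (size w) j.
Definition LM (w : seq nat) k := (k < size w)%N /\
  (forall i, i < size w -> nth 0 w i <= nth 0 w k)%N /\
  (forall i, k < i -> i < size w -> nth 0 w i < nth 0 w k)%N.

Lemma LM_exists w : w <> [::] -> exists k, LM w k.
Proof.
elim: w => [//|a w IH] _.
case: w IH => [|b w] IH.
  exists 0%N; split=> //; split=> [[|i]|i] //=; lia.
have [k [kl [k2 k3]]] : exists k, LM (b :: w) k by apply: IH.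
case: (ltnP (nth 0 (b::w) k) a) => H.
- exists 0%N; split=> //; split.
  + case=> [|i] //= il; have := k2 i il; rewrite /=; lia.
  + case=> [|i] //= _ il; have := k2 i il; rewrite /=; lia.
- exists k.+1; split=> //; split.
  + case=> [|i] //= il; exact: k2.
  + case=> [|i] //= ki il; exact: k3.
Qed.

Definition delk k (w : seq nat) := take k w ++ drop k.+1 w.

Lemma bumpE k j : bump k j = if (j < k)%N then j else j.+1.
Proof. rewrite /bump; case: ltnP => c; lia. Qed.

Lemma nth_delk k w j : (k < size w)%N -> nth 0 (delk k w) j = nth 0 w (bump k j).
Proof.
move=> kw; rewrite /delk nth_cat size_take kw bumpE.
case: ltnP => jk; first by rewrite nth_take.
by rewrite nth_drop; congr nth; lia.
Qed.

Lemma size_delk k w : (k < size w)%N -> size (delk k w) = (size w).-1.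
Proof. move=> kw; rewrite /delk size_cat size_take size_drop kw; lia. Qed.

Lemma Pw_delk k w i j : (k < size w)%N -> Pw (delk k w) i j = Pw w (bump k i) (bump k j).
Proof.
move=> kw; rewrite /Pw !nth_delk //; congr (_ || (_ && _)); rewrite !bumpE.
by case: (ltnP i k) => ?; case: (ltnP j k) => ?; lia.
Qed.

Lemma LM_le w k J : LM w k -> (nth 0 w J <= nth 0 w k)%N.
Proof.
case=> kl [k2 k3]; case: (ltnP J (size w)) => Jl; first exact: k2.
by rewrite nth_default.
Qed.

Lemma LM_Pw_k w k J : LM w k -> Pw w k J = false.
Proof. move=> L; have := LM_le J L; rewrite /Pw; lia. Qed.

Lemma iota_perm_bump k n : (k < n)%N ->
  perm_eq (iota 0 n) (k :: map (bump k) (iota 0 n.-1)).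
Proof.
move=> kn; apply: uniq_perm.
- exact: iota_uniq.
- rewrite /= map_inj_uniq ?iota_uniq ?andbT; last exact: (can_inj (bumpK k)).
  by apply/mapP => -[i _ E]; move: (neq_bump k i); rewrite -E eqxx.
- move=> i; rewrite inE mem_iota add0n; apply/idP/idP.
  + move=> ilt; case: (eqVneq i k) => [->|ik] //=.
    apply/mapP; exists (unbump k i); last by rewrite unbumpKcond (negbTE ik).
    rewrite mem_iota add0n /unbump; lia.
  + case/orP => [/eqP -> //| /mapP [j]]; rewrite mem_iota add0n => jl ->.
    rewrite bumpE; case: ltnP => *; lia.
Qed.

Lemma count_delk w k (p : pred nat) : (k < size w)%N ->
  count p (iota 0 (size w)) = (p k + count (p \o bump k) (iota 0 (size (delk k w))))%N.
Proof. by move=> kw; rewrite (permP (iota_perm_bump kw)) /= count_map size_delk. Qed.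

Lemma dd_delk w k j : LM w k -> dd (delk k w) j = dd w (bump k j).
Proof.
move=> L; have kw := L.1.
rewrite /dd /ddr (count_delk _ kw) LM_Pw_k //= add0n.
by apply: eq_count => i; rewrite /= Pw_delk.
Qed.

Lemma ddseq_delk w k : LM w k ->
  perm_eq (ddseq (Pw w) (size w)) (dd w k :: ddseq (Pw (delk k w)) (size (delk k w))).
Proof.
move=> L; have kw := L.1.
rewrite /ddseq (permPl (perm_map _ (iota_perm_bump kw))) /= -(size_delk kw).
rewrite perm_cons -map_comp.
rewrite (eq_map (g := ddr (Pw (delk k w)) (size (delk k w)))) //.
by move=> j /=; rewrite -/(dd _ _) -dd_delk.
Qed.

Lemma dd_max w k j : LM w k -> (j < size w)%N -> (dd w j <= dd w k)%N.
Proof.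
case=> kl [k2 k3] jl; rewrite /dd /ddr; apply: sub_count => i; rewrite /Pw.
have := k2 j jl; case: (ltnP k j) => kj; first (have := k3 j kj jl); lia.
Qed.

Lemma valid_delk w k : validh 0 w -> LM w k -> validh 0 (delk k w).
Proof.
move=> V L; have kl := L.1; have [_ [k2 k3]] := L.
move=> i; rewrite size_delk // => il.
case: i il => [|i] il /=; rewrite !nth_delk // !bumpE.
- case: ltnP => k0; first by have := V 0%N ltac:(lia).
  have := V 0%N ltac:(lia); have := k3 1%N ltac:(lia) ltac:(lia); rewrite /=.
  have -> : k = 0%N by lia. lia.
- case: (ltnP i.+1 k) => c1.
  + rewrite ifT; last lia. by apply: (V i.+1); lia.
  + case: (ltnP i k) => c2.
    * have ek : k = i.+1 by lia. subst k.
      have := V i.+1 kl; have := k3 i.+2 ltac:(lia) ltac:(lia); rewrite /=; lia.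
    * by apply: (V i.+2); lia.
Qed.

Definition insdd (v : seq nat) k h := count (fun i =>
  (nth 0 v i + 2 <= h) || (h == (nth 0 v i).+1) && (i < k))%N (iota 0 (size v)).

Lemma dd_k w k : LM w k -> dd w k = insdd (delk k w) k (nth 0 w k).
Proof.
move=> L; have kw := L.1.
rewrite /dd /ddr (count_delk _ kw) LM_Pw_k //= add0n /insdd.
apply: eq_count => i /=; rewrite /Pw nth_delk //; congr (_ || (_ && _)).
rewrite bumpE; case: (ltnP i k) => *; lia.
Qed.

Definition facts (v : seq nat) k h := [/\ (forall i, i < size v -> nth 0 v i <= h),
  (forall i, k <= i -> i < size v -> nth 0 v i < h),
  (if k is k'.+1 then h <= (nth 0 v k').+1 else h == 0) & k <= size v]%N.

Lemma LM_facts w k : validh 0 w -> LM w k -> facts (delk k w) k (nth 0 w k).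
Proof.
move=> V L; have kl := L.1; have [_ [k2 k3]] := L.
split.
- move=> i; rewrite size_delk // nth_delk // => il; apply: k2; rewrite bumpE; case: (ltnP i k) => *; lia.
- move=> i ki; rewrite size_delk // nth_delk // => il; rewrite bumpE ifF; last lia.
  apply: k3; lia.
- case: k L kl k2 k3 => [|k] L kl k2 k3; first by have := V 0%N kl; rewrite /=; lia.
  rewrite nth_delk // bumpE ltnSn; exact: V.
- rewrite size_delk //; lia.
Qed.

Lemma count_lt (s : seq nat) (p q : pred nat) : subpred p q ->
  (exists i, i \in s /\ q i /\ ~~ p i) -> (count p s < count q s)%N.
Proof.
move=> H; elim: s => [|a s IH] [i [ins [qi npi]]] //=.
have pq : (p a <= q a)%N by case: (p a) (H a) => // ->.
rewrite inE in ins; case/orP: ins => [/eqP ei|ins].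
  subst a; have := sub_count H s; move: qi npi; case: (p i); case: (q i) => //= *; lia.
have := IH (ex_intro _ i (conj ins (conj qi npi))); lia.
Qed.

Lemma ins_h v k1 h1 k2 h2 : facts v k1 h1 -> facts v k2 h2 -> (h1 < h2)%N ->
  (insdd v k1 h1 < insdd v k2 h2)%N.
Proof.
case=> [F1 F2 F3 F4] [G1 G2 G3 G4] hh.
case: k2 G2 G3 G4 => [|k'] G2 G3 G4; first by move: G3 => /eqP; lia.
have := F1 k' ltac:(lia) => vk.
apply: count_lt.
  move=> i /=; lia.
exists k'; split; first by rewrite mem_iota; lia.
split; lia.
Qed.

Lemma ins_k v k1 k2 h : facts v k1 h -> facts v k2 h -> (k1 < k2)%N ->
  (insdd v k1 h < insdd v k2 h)%N.
Proof.
case=> [F1 F2 F3 F4] [G1 G2 G3 G4] kk.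
case: k2 G2 G3 G4 kk => [|k'] G2 G3 G4 kk; first lia.
have := F2 k' ltac:(lia) ltac:(lia) => vk.
apply: count_lt.
  move=> i /=; lia.
exists k'; split; first by rewrite mem_iota; lia.
split; lia.
Qed.

Lemma ins_uniq v k1 h1 k2 h2 : facts v k1 h1 -> facts v k2 h2 ->
  insdd v k1 h1 = insdd v k2 h2 -> k1 = k2 /\ h1 = h2.
Proof.
move=> f1 f2 e.
have hh : h1 = h2.
  case: (ltngtP h1 h2) => // c.
  - by have := ins_h f1 f2 c; lia.
  - by have := ins_h f2 f1 c; lia.
subst h2; split => //.
case: (ltngtP k1 k2) => // c.
- by have := ins_k f1 f2 c; lia.
- by have := ins_k f2 f1 c; lia.
Qed.

Lemma delk_rebuild w k : LM w k -> w = take k (delk k w) ++ nth 0 w k :: drop k (delk k w).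
Proof.
move=> L; have kw := L.1.
have sk : size (take k w) = k by rewrite size_take kw.
rewrite /delk -{1}sk take_size_cat // -{3}sk drop_size_cat //.
by rewrite -drop_nth // cat_take_drop.
Qed.

Lemma dd_inj n : forall w1 w2, size w1 = n -> size w2 = n -> validh 0 w1 -> validh 0 w2 ->
  perm_eq (ddseq (Pw w1) n) (ddseq (Pw w2) n) -> w1 = w2.
Proof.
elim: n => [|n IH] w1 w2 s1 s2 V1 V2 P.
  by move/size0nil: s1 => ->; move/size0nil: s2 => ->.
have [k1 L1] : exists k, LM w1 k by apply: LM_exists => E; rewrite E in s1.
have [k2 L2] : exists k, LM w2 k by apply: LM_exists => E; rewrite E in s2.
have mem1 : forall c, c \in ddseq (Pw w1) n.+1 -> (c <= dd w1 k1)%N.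
  move=> c; rewrite -s1 => /mapP [j]; rewrite mem_iota add0n => jl ->.
  exact: dd_max.
have mem2 : forall c, c \in ddseq (Pw w2) n.+1 -> (c <= dd w2 k2)%N.
  move=> c; rewrite -s2 => /mapP [j]; rewrite mem_iota add0n => jl ->.
  exact: dd_max.
have in1 : dd w1 k1 \in ddseq (Pw w1) n.+1.
  by rewrite -s1; apply/mapP; exists k1; rewrite // mem_iota add0n; exact: L1.1.
have in2 : dd w2 k2 \in ddseq (Pw w2) n.+1.
  by rewrite -s2; apply/mapP; exists k2; rewrite // mem_iota add0n; exact: L2.1.
have ec : dd w1 k1 = dd w2 k2.
  apply/eqP; rewrite eqn_leq; apply/andP; split.
    by apply: mem2; rewrite -(perm_mem P).
  by apply: mem1; rewrite (perm_mem P).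
have Q1 := ddseq_delk L1; have Q2 := ddseq_delk L2.
rewrite s1 in Q1; rewrite s2 in Q2.
have sd1 : size (delk k1 w1) = n by rewrite size_delk; [rewrite s1 | exact: L1.1].
have sd2 : size (delk k2 w2) = n by rewrite size_delk; [rewrite s2 | exact: L2.1].
rewrite sd1 in Q1; rewrite sd2 in Q2.
have P' : perm_eq (ddseq (Pw (delk k1 w1)) n) (ddseq (Pw (delk k2 w2)) n).
  by rewrite -(perm_cons (dd w1 k1)) {2}ec -(permPl Q1) -(permPr Q2).
have ev := IH _ _ sd1 sd2 (valid_delk V1 L1) (valid_delk V2 L2) P'.
have := dd_k L1; have := dd_k L2; rewrite ec => -> e.
have F2 := LM_facts V2 L2; rewrite -ev in F2.
rewrite -ev in e.
have [ek eh] := ins_uniq (LM_facts V1 L1) F2 (esym e).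
by rewrite (delk_rebuild L1) (delk_rebuild L2) eh ev ek.
Qed.


Lemma split_row D k : (k < count id D)%N ->
  exists u s, D = u ++ true :: s /\ count id u = k.
Proof.
elim: D k => [|b D IH] k //=.
case: b => /= H.
- case: k H => [|k] H; first by exists [::], D.
  have [u [s [-> cu]]] := IH k ltac:(lia).
  by exists (true :: u), s; split => //=; rewrite cu.
- have [u [s [-> cu]]] := IH k H.
  by exists (false :: u), s.
Qed.

Lemma heightE D j : nn 0 D ->
  height D j = ((count id (take j D) - count negb (take j D))%N : int).
Proof.
move=> H; have := take_nn j H; rewrite add0n => le.
by rewrite /height subzn.
Qed.

Lemma main_aux (R : realFieldType) (n : nat) (x : seq R) (y : R)
    (D D' : seq bool) :
  unit_interval_config n x ->
  all (fun t => (t <= y)%R) x ->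
  dyck n D -> rel_iso n (uio_rel x) (Pw (area D)) ->
  dyck n.+1 D' -> rel_iso n.+1 (uio_rel (rcons x y)) (Pw (area D')) ->
  adds_final_max_peak D D'.
Proof.
move=> [sx _] ally dD iso1 dD' iso2.
have [nnD eD szD cD] := dyck_facts dD.
have [nnD' eD' szD' cD'] := dyck_facts dD'.
rewrite (area_areaR nnD) in iso1; rewrite (area_areaR nnD') in iso2.
have sw : size (areaR 0 D) = n by rewrite size_areaR.
have sw' : size (areaR 0 D') = n.+1 by rewrite size_areaR.
have P1 := rel_iso_dd iso1; have P2 := rel_iso_dd iso2.
have [E2 cmax] := uio_dd sx ally.
set c := ddr (uio_rel (rcons x y)) n.+1 n in E2 cmax.
have [k L] : exists k, LM (areaR 0 D') k.
  by apply: LM_exists => E; rewrite E in sw'.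
have Q := ddseq_delk L; rewrite sw' in Q.
have sd : size (delk k (areaR 0 D')) = n.
  by rewrite size_delk; [rewrite sw' | exact: L.1].
rewrite sd in Q.
have ec : c = dd (areaR 0 D') k.
  apply/eqP; rewrite eqn_leq; apply/andP; split.
  - have : c \in ddseq (Pw (areaR 0 D')) n.+1.
      by rewrite -(perm_mem P2) E2 mem_rcons mem_head.
    rewrite -sw' => /mapP [j]; rewrite mem_iota add0n => jl ->; exact: dd_max.
  - have : dd (areaR 0 D') k \in ddseq (uio_rel (rcons x y)) n.+1.
      rewrite (perm_mem P2) -sw'; apply/mapP; exists k => //.
      rewrite mem_iota add0n; exact: L.1.
    rewrite /ddseq => /mapP [j]; rewrite mem_iota add0n => jl ->; apply: cmax; lia.
have P3 : perm_eq (ddseq (Pw (delk k (areaR 0 D'))) n) (ddseq (Pw (areaR 0 D)) n).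
  rewrite -(perm_cons c) {1}ec -(permPl Q) -(permPl P2) E2 (perm_rcons c _) perm_cons.
  exact: P1.
have ev := dd_inj sd sw (valid_delk (@validh_areaR 0 D') L) (@validh_areaR 0 D) P3.
clear iso1 iso2 P1 P2 Q P3 E2 cmax ec c ally dD dD'.
have kc : (k < count id D')%N by rewrite -(size_areaR 0); exact: L.1.
have [u [s [eDs cu]]] := split_row kc.
have hu := areaR_cat 0 u (true :: s); rewrite -eDs /= in hu.
set h := endh 0 u in hu.
have su : size (areaR 0 u) = k by rewrite size_areaR.
have nk : nth 0 (areaR 0 D') k = h by rewrite hu nth_cat su ltnn subnn.
have [kl [k2 k3]] := L.
case: s eDs hu => [|b v] eDs hu.
  by exfalso; move: eD'; rewrite eDs endh_cat.
case: b eDs hu => /= eDs hu.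
  exfalso; have kk : (k.+1 < k)%N = false by lia.
  have e1 : nth 0 (areaR 0 D') k.+1 = h.+1 by rewrite hu nth_cat su kk subSnn.
  have sz : (k.+1 < size (areaR 0 D'))%N by rewrite hu size_cat /= su; lia.
  have := k3 k.+1 (ltnSn k) sz; rewrite nk e1; lia.
have nnu : nn 0 u by move: nnD'; rewrite eDs nn_cat => /andP[].
have nnv : nn h v by move: nnD'; rewrite eDs nn_cat /= => /andP[_].
have [hE hle] := endhE nnu.
exists u, v; split; last split => //.
  apply: esym; apply: (areaR_inj (h := 0)) => //.
  - by rewrite nn_cat nnu.
  - by rewrite endh_cat eD; move: eD'; rewrite eDs endh_cat.
  - rewrite areaR_cat -ev /delk hu -{1}su take_size_cat //.
    by rewrite -cat_rcons drop_size_cat // size_rcons su.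
have hD'su : height D' (size u).+1 = (h.+1 : int).
  have uu : ((size u).+1 < size u)%N = false by lia.
  rewrite heightE // eDs take_cat uu subSnn /= !count_cat /=; congr Posz; lia.
split; first split.
- split; first by rewrite eDs size_cat /=; lia.
  by rewrite eDs !nth_cat ltnn subnn ltnNge leqnSn /= subSnn.
- move=> j _; rewrite hD'su heightE // lez_nat.
  have := height_bound nnD' (M := h.+1) (leq0n _) _ j; rewrite add0n; apply.
  move=> z zin; rewrite -nk ltnS.
  by rewrite -(nth_index 0 zin); apply: k2; rewrite index_mem.
- move=> j [[jl [nj nj1]] mx]; rewrite leqNgt; apply/negP => uj.
  have j1 : j != (size u).+1.
    apply/eqP => ej; move: nj; rewrite ej eDs nth_cat ltnNge leqnSn /= subSnn //.
  have := mx (size u).+1 ltac:(rewrite eDs size_cat /=; lia).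
  rewrite hD'su heightE // lez_nat eDs take_cat ifF; last lia.
  have -> : (j.+1 - size u = (j.+1 - size u - 2).+2)%N by lia.
  set m := (j.+1 - size u - 2)%N; rewrite /= !count_cat /=.
  have VB : forall z, z \in areaR h v -> (z < h)%N.
    move=> z zin; set i := index z (areaR h v).
    have il : (i < size (areaR h v))%N by rewrite index_mem.
    have ki : (k.+1 + i < k)%N = false by lia.
    have e1 : nth 0 (areaR 0 D') (k.+1 + i) = z.
      by rewrite hu nth_cat su ki (_ : (k.+1 + i - k = i.+1)%N) /= ?nth_index //; lia.
    rewrite -e1 -nk; apply: k3; first lia.
    by rewrite hu size_cat su /=; lia.
  have := take_nn m nnv; have := height_bound nnv (leqnn h) VB m.
  move=> B T; move: hE hle B T; rewrite -/h.
  move: (count id u) (count negb u) (count id (take m v)) (count negb (take m v)) => a b c d.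
  clear; lia.
Qed.

Unset Implicit Arguments.
Local Open Scope ring_scope.

Theorem mainTheorem7 (R : realFieldType) (n : nat) (x : seq R) (y : R)
    (D D' : seq bool) :
  unit_interval_config n x ->
  all (fun t => t <= y) x ->
  dyck n D -> rel_iso n (uio_rel x) (Pw (area D)) ->
  dyck n.+1 D' -> rel_iso n.+1 (uio_rel (rcons x y)) (Pw (area D')) ->
  adds_final_max_peak D D'.
Proof. exact: main_aux. Qed.
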